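(* The growth-rate of the family of NSG-compositions with maximum $5$ having a unique part equal to $5$ is at most the growth-rate $\gamma_4$ of the family of NSG-compositions with maximum $4$.
   Context: An NSG-composition is a composition $x_1+\cdots+x_{m-1}$ of positive integers satisfying $x_{s+t}\le x_s+x_t$ and $x_{m-s-t}\le x_{m-s}+x_{m-t}+1$ for all $s,t\ge1$, $s+t<m$ (equivalently, the Kunz vector of a numerical semigroup of multiplicity $m$); its genus is $\sum x_j$ and its maximum is $\max_j x_j$. The growth-rate of a family is $\limsup_{g\to\infty}a_g^{1/g}$ with $a_g$ the number of members of genus $g$. *)

(* Defs.v *)
From mathcomp Require Import all_boot all_order all_algebra.
From mathcomp Require Import all_classical all_reals all_analysis.
Set Implicit Arguments. Unset Strict Implicit. Unset Printing Implicit Defensive.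

(* A composition x_1 + ... + x_{m-1} is represented by the list
   s = [:: x_1; ...; x_{m-1}], so m = (size s).+1.  Parts are 1-indexed. *)
Definition part (s : seq nat) (j : nat) : nat := nth 0 s j.-1.

Definition is_NSG (s : seq nat) : bool :=
  let m := (size s).+1 in
  all (fun x => 0 < x) s &&
  all (fun a => all (fun b =>
        (a + b < m) ==>
        ((part s (a + b) <= part s a + part s b) &&
         (part s (m - a - b) <= part s (m - a) + part s (m - b) + 1)))
      (iota 1 (size s))) (iota 1 (size s)).

Definition genus (s : seq nat) : nat := sumn s.
Definition maxpart (s : seq nat) : nat := \max_(x <- s) x.

(* Number of NSG-compositions of genus g satisfying P.  A composition of
   genus g has at most g parts, each at most g, so it is encoded (uniquely)
   as an n-tuple over 'I_g.+1 for some n <= g. *)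
Definition family_count (P : seq nat -> bool) (g : nat) : nat :=
  \sum_(n < g.+1)
    #|[set x : n.-tuple 'I_g.+1 |
        let s := map (@nat_of_ord _) (val x) in
        [&& is_NSG s, genus s == g & P s]]|.

Definition growth_rate (R : realType) (a : nat -> nat) : \bar R :=
  limn_esup (fun g => (((a g)%:R : R) `^ (g%:R^-1))%:E).

Definition max_k (k : nat) (s : seq nat) : bool := maxpart s == k.
Definition max5_unique5 (s : seq nat) : bool :=
  (maxpart s == 5) && (count_mem 5 s == 1).

(* Main.v *)
Require Import Defs.
From mathcomp Require Import all_boot all_order all_algebra.
From mathcomp Require Import all_classical all_reals all_analysis.
From mathcomp Require Import lra zify.


Lemma size_le_sumn (s : seq nat) : all (fun x => 0 < x) s -> size s <= sumn s.
Proof. elim: s => //= x s IH /andP[hx /IH]; lia. Qed.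

Lemma nsg_transfer (s t : seq nat) :
  size t = size s -> all (fun x => 0 < x) t -> all (fun x => x <= 4) t ->
  (forall k, nth 0 t k <= nth 0 s k) ->
  (forall k, nth 0 t k = nth 0 s k \/ nth 0 t k = 4) ->
  is_NSG s -> is_NSG t.
Proof.
move=> hsz hpos h4 hle hor /andP[_ H].
apply/andP; split => //; rewrite hsz.
have posQ : forall k, 1 <= k <= size s -> 0 < part t k.
  case=> // k hk; rewrite /part /=; apply: (allP hpos); apply: mem_nth; rewrite hsz; by case/andP: hk.
have le4 : forall k, part t k <= 4.
  move=> k; rewrite /part; case: (ltnP k.-1 (size t)) => hk.
    by apply: (allP h4); apply: mem_nth.
  by rewrite nth_default.
have leP : forall k, part t k <= part s k by move=> k; apply: hle.
have orP' : forall k, part t k = part s k \/ part t k = 4 by move=> k; apply: hor.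
apply/allP => x hx; apply/allP => y hy; apply/implyP => hxy.
move: (allP H x hx) => /allP /(_ y hy) /implyP /(_ hxy) /andP[c1 c2].
move: hx hy; rewrite !mem_iota => hx hy.
have px := posQ x ltac:(lia). have py := posQ y ltac:(lia).
have pmx := posQ ((size s).+1 - x) ltac:(lia).
have pmy := posQ ((size s).+1 - y) ltac:(lia).
apply/andP; split.
- have := le4 (x + y); have := leP (x + y).
  case: (orP' x) => ->; case: (orP' y) => ->; lia.
- have := le4 ((size s).+1 - x - y); have := leP ((size s).+1 - x - y).
  case: (orP' ((size s).+1 - x)) => ->; case: (orP' ((size s).+1 - y)) => ->; lia.
Qed.

Lemma decomp5 (s : seq nat) : all (fun x => 0 < x) s -> max5_unique5 s ->
  exists l r, s = l ++ 5 :: r /\ all (fun x => x <= 4) (l ++ r).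
Proof.
move=> hpos /andP[/eqP hm /eqP hc].
have : 5 \in s by rewrite -has_pred1 has_count hc.
move=> h5; move: hpos hm hc; case/splitPr: h5 => l r hpos hm hc.
exists l, r; split => //.
apply/allP => z hz.
have z5 : z <= 5.
  have hz' : z \in l ++ 5 :: r.
    by move: hz; rewrite !mem_cat inE; case/orP => ->; rewrite ?orbT.
  apply: leq_trans (@leq_bigmax_seq _ _ xpredT (fun x => x) z hz' isT) _.
  exact: (eq_leq hm).
have zn5 : z != 5.
  apply/eqP => ez.
  have : 0 < count (pred1 5) (l ++ r) by rewrite -has_count has_pred1 -ez.
  move: hc; rewrite !count_cat /= ?eqxx /=; lia.
lia.
Qed.

Lemma set_nth_mid (l r : seq nat) a b : set_nth 0 (l ++ a :: r) (size l) b = l ++ b :: r.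
Proof. by elim: l => //= x l ->. Qed.

Lemma map_val_mktuple K n (t : seq nat) : size t = n -> all (fun x => x < K.+1) t ->
  map (@nat_of_ord _) (val [tuple (inord (nth 0 t i) : 'I_K.+1) | i < n]) = t.
Proof.
move=> hs ha; apply: (@eq_from_nth _ 0); first by rewrite size_map size_tuple.
move=> i; rewrite size_map size_tuple => hi.
rewrite (nth_map ord0) ?size_tuple //.
have -> : nth ord0 [tuple (inord (nth 0 t i) : 'I_K.+1) | i < n] i =
          tnth [tuple (inord (nth 0 t i) : 'I_K.+1) | i < n] (Ordinal hi)
  by rewrite (tnth_nth ord0).
rewrite tnth_mktuple inordK //; apply: (allP ha); by apply: mem_nth; rewrite hs.
Qed.

Definition setA (g n : nat) : {set n.-tuple 'I_g.+2} :=
  [set x : n.-tuple 'I_g.+2 | let s := map (@nat_of_ord _) (val x) in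
        [&& is_NSG s, genus s == g.+1 & max5_unique5 s]].
Definition setB (g n : nat) : {set n.-tuple 'I_g.+1} :=
  [set x : n.-tuple 'I_g.+1 | let s := map (@nat_of_ord _) (val x) in
        [&& is_NSG s, genus s == g & max_k 4 s]].

Definition hmap (g n : nat) (p : 'I_n * n.-tuple 'I_g.+1) : n.-tuple 'I_g.+2 :=
  [tuple (inord (nth 0 (set_nth 0 (map (@nat_of_ord _) (val p.2)) p.1 5) i) : 'I_g.+2) | i < n].

Lemma setA_sub g n : setA g n \subset [set @hmap g n p | p in finset.setX [set: 'I_n] (setB g n)].
Proof.
apply/fintype.subsetP => x; rewrite inE /= => /and3P[hN /eqP hg hU].
set s := map _ _ in hN hg hU.
have hpos : all (fun x => 0 < x) s by case/andP: hN.
have [l [r [hs h4]]] := @decomp5 s hpos hU.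
set t := l ++ 4 :: r.
have hsz : size s = n by rewrite size_map size_tuple.
have hl : size l < n by rewrite -hsz hs size_cat /=; lia.
have sumt : sumn t = g.
  move: hg; rewrite /genus hs /t !sumn_cat /=; lia.
have g4 : 4 <= g.
  move: hg; rewrite /genus hs sumn_cat /=; lia.
have ht4 : all (fun x => x <= 4) t by move: h4; rewrite /t !all_cat /= => /andP[-> ->].
have htsz : size t = n by rewrite -hsz hs /t !size_cat.
set y := [tuple (inord (nth 0 t i) : 'I_g.+1) | i < n].
have hy : map (@nat_of_ord _) (val y) = t.
  apply: map_val_mktuple => //; apply/allP => z hz; move: (allP ht4 z hz); lia.
apply/imsetP; exists (Ordinal hl, y).
  rewrite inE /= inE /= /setB inE /= hy; apply/and3P; split.
  - apply: (@nsg_transfer s) => //.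
    + by rewrite htsz hsz.
    + by move: hpos; rewrite hs /t !all_cat /=.
    + move=> k; rewrite hs /t !nth_cat; case: ifP => // _.
      by case: (k - size l).
    + move=> k; rewrite hs /t !nth_cat; case: ifP => _; first by left.
      by case: (k - size l) => [|j]; [right|left].
  - by rewrite /genus sumt.
  - rewrite /max_k /maxpart eqn_leq; apply/andP; split.
      by apply/bigmax_leqP_seq => i hi _; apply: (allP ht4).
    apply: (@leq_bigmax_seq _ _ xpredT id 4) => //.
    by rewrite /t mem_cat inE eqxx orbT.
apply: val_inj; apply: (@inj_map _ _ (@nat_of_ord g.+2)); first exact: val_inj.
rewrite /hmap /= hy /t set_nth_mid -hs -/s map_val_mktuple //.
apply/allP => z; rewrite /s => /mapP[w _ ->]; exact: ltn_ord.
Qed.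

Lemma setA_card g n : #|setA g n| <= n * #|setB g n|.
Proof.
apply: leq_trans (subset_leq_card (setA_sub g n)) _.
apply: leq_trans (leq_imset_card _ _) _.
by rewrite cardsX cardsT card_ord.
Qed.

Lemma setB_last g : #|setB g g.+1| = 0.
Proof.
apply/eqP; rewrite cards_eq0; apply/eqP/setP => x; rewrite !inE /=.
apply/negP => /and3P[/andP[hp _] /eqP hg _].
move: (@size_le_sumn _ hp); rewrite size_map size_tuple; rewrite /genus in hg; rewrite hg; lia.
Qed.

Lemma count_bound g :
  family_count max5_unique5 g.+1 <= g * family_count (max_k 4) g.
Proof.
rewrite /family_count.
have -> : \sum_(n < g.+2) #|[set x : n.-tuple 'I_g.+2 |
        let s := map (@nat_of_ord _) (val x) in
        [&& is_NSG s, genus s == g.+1 & max5_unique5 s]]| =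
   \sum_(n < g.+2) #|setA g n| by [].
have -> : \sum_(n < g.+1) #|[set x : n.-tuple 'I_g.+1 |
        let s := map (@nat_of_ord _) (val x) in
        [&& is_NSG s, genus s == g & max_k 4 s]]| =
   \sum_(n < g.+1) #|setB g n| by [].
apply: (@leq_trans (\sum_(n < g.+2) n * #|setB g n|)); first by apply: leq_sum => n _; exact: setA_card.
rewrite big_ord_recr /= setB_last muln0 addn0 big_distrr /=.
apply: leq_sum => i _; rewrite leq_mul2r; apply/orP; right.
by rewrite -ltnS.
Qed.

Import Order.TTheory GRing.Theory Num.Theory.
Local Open Scope ring_scope.

Lemma bern2 (R : realType) (d : R) n : 0 <= d ->
  1 + n%:R * d + (n%:R * (n%:R - 1) / 2) * d ^+ 2 <= (1 + d) ^+ n.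
Proof.
move=> d0; elim: n => [|n IH]; first by rewrite !mul0r !addr0 expr0 lexx.
have hn : 0 <= n%:R * (n%:R - 1) :> R.
  case: n {IH} => [|k]; first by rewrite mul0r.
  by rewrite -natr1 addrK mulr_ge0 // addr_ge0.
have h1 : 0 <= 1 + d by lra.
rewrite [(1 + d) ^+ n.+1]exprSr; apply: le_trans (ler_wpM2r h1 IH).
rewrite -natr1 /=.
have hd3 : 0 <= n%:R * (n%:R - 1) / 2 * d ^+ 3 :> R.
  by rewrite mulr_ge0 ?divr_ge0 ?exprn_ge0.
rewrite !expr2 !exprS ?expr0 in hd3 *.
nra.
Qed.

Lemma lin_le_exp (R : realType) (d : R) : 0 < d ->
  exists K, forall n, (K <= n)%N -> n%:R <= (1 + d) ^+ n.
Proof.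
move=> d0; exists (Num.trunc (2 / d ^+ 2)).+2 => n hn.
have d2 : 0 < d ^+ 2 by rewrite exprn_gt0.
case: n hn => [|m] // hm.
have hx := truncnS_gt (2 / d ^+ 2).
have hm' : ((Num.trunc (2 / d ^+ 2)).+1%:R <= m%:R :> R) by rewrite ler_nat.
have h2 : 2 <= m%:R * d ^+ 2.
  rewrite -ler_pdivrMr //; exact: le_trans (ltW hx) hm'.
apply: (le_trans _ (@bern2 R d m.+1 (ltW d0))).
rewrite -natr1 addrK.
have hm0 : 0 <= m%:R :> R by [].
rewrite expr2 in h2 *. nra.
Qed.

Lemma powR_root_exp (R : realType) (x : R) m : 0 <= x -> (0 < m)%N ->
  (x `^ (m%:R^-1)) ^+ m = x.
Proof.
move=> x0 m0; rewrite -powR_mulrn ?powR_ge0 // -powRrM mulVf ?powRr1 //.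
by rewrite pnatr_eq0 -lt0n.
Qed.

Lemma powR_exp_root (R : realType) (c : R) m : 0 <= c -> (0 < m)%N ->
  (c ^+ m) `^ (m%:R^-1) = c.
Proof.
move=> c0 m0; rewrite -powR_mulrn // -powRrM mulfV ?powRr1 //.
by rewrite pnatr_eq0 -lt0n.
Qed.

Lemma ereal_le_from_above (R : realType) (X L : \bar R) :
  (forall r : R, (L < r%:E)%E -> (X <= r%:E)%E) -> (X <= L)%E.
Proof.
case: L => [l| |] H; [|by rewrite leey|].
- case: X H => [x| |] H; last by rewrite leNye.
  + rewrite lee_fin leNgt; apply/negP => lx.
    have h1 : (l < (l + x) / 2)%R by lra.
    have := H ((l + x) / 2)%R; rewrite !lte_fin lee_fin => /(_ h1) h2; lra.
  + have h1 : (l < l + 1)%R by lra.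
    by have := H (l + 1)%R; rewrite lte_fin leye_eq => /(_ h1).
- case: X H => [x| |] H; last by rewrite leNye.
  + have := H (x - 1)%R (ltNyr _); rewrite lee_fin => h; exfalso; lra.
  + by have := H 0%R (ltNyr _); rewrite leye_eq.
Qed.

Lemma growth_le (R : realType) (a b : nat -> nat) :
  (forall g, (a g.+1 <= g * b g)%N) ->
  (growth_rate R a <= growth_rate R b)%E.
Proof.
move=> Hab.
apply: ereal_le_from_above => r.
rewrite /growth_rate /limn_esup /limf_esup => /ereal_inf_lt [_ [V [N _ HN] <-]] Hr.
set v := fun g => ((b g)%:R : R) `^ (g%:R^-1).
have vlt : forall n, (N <= n)%N -> v n < r.
  move=> n hn; rewrite -lte_fin; apply: le_lt_trans Hr.
  by apply: ereal_sup_ubound; exists n => //; apply: HN.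
have r0 : 0 < r by apply: le_lt_trans (vlt N (leqnn N)); apply: powR_ge0.
apply/lee_addgt0Pr => e e0.
set d := e / (`|r| + 1).
have hr1 : 0 < `|r| + 1 by rewrite ltr_wpDl.
have d0 : 0 < d by rewrite divr_gt0.
have dE : d * (`|r| + 1) = e by rewrite /d divfK // gt_eqF.
have [K HK] := @lin_le_exp R d d0.
apply: (@le_trans _ _ (ereal_sup ((fun g => (((a g)%:R : R) `^ (g%:R^-1))%:E)
     @` [set n : nat | (maxn N.+2 K <= n)%N]%classic))).
  by apply: ereal_inf_lbound; exists [set n : nat | (maxn N.+2 K <= n)%N]%classic => //; exists (maxn N.+2 K).
apply: ge_ereal_sup => _ [n hn <-]; rewrite -EFinD lee_fin.
move: hn; rewrite /= geq_max => /andP[hNn hKn].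
case: n hNn hKn => [|m] // hNm hKm.
have m0 : (0 < m)%N by lia.
have hm : (N <= m)%N by lia.
have ere : 0 <= r + e by lra.
have [b0|bpos] := eqVneq (b m) 0%N.
  have : a m.+1 = 0%N by apply/eqP; rewrite -leqn0; move: (Hab m); rewrite b0 muln0.
  by move=> ->; rewrite powR0 // invr_eq0 pnatr_eq0.
have vm := vlt m hm.
have hb : ((b m)%:R : R) < r ^+ m.
  rewrite -[X in X < _](@powR_root_exp R (b m)%:R m) //.
  by rewrite ltrXn2r ?powR_ge0 // -lt0n.
have r1 : 1 < r.
  rewrite ltNge; apply/negP => r1.
  have : r ^+ m <= 1 by rewrite exprn_ile1 // ltW.
  have : 1 <= ((b m)%:R : R) by rewrite ler1n lt0n.
  lra.
have ha : ((a m.+1)%:R : R) <= (r + e) ^+ m.+1.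
  apply: (@le_trans _ _ (m%:R * (b m)%:R)); first by rewrite -natrM ler_nat.
  apply: (@le_trans _ _ (m.+1%:R * r ^+ m.+1)).
    apply: ler_pM; rewrite ?ler_nat //; last first.
      by rewrite exprSr; apply: le_trans (ltW hb) _; rewrite ler_peMr ?exprn_ge0 ?ltW //; lra.
  apply: (@le_trans _ _ ((1 + d) ^+ m.+1 * r ^+ m.+1)).
    by apply: ler_wpM2r; [rewrite exprn_ge0 // ltW | exact: HK].
  rewrite -exprMn lerXn2r ?nnegrE ?mulr_ge0 //; try lra.
  have : `|r| = r by rewrite gtr0_norm.
  nra.
rewrite -(@powR_exp_root R (r + e) m.+1) //.
by apply: ge0_ler_powR; rewrite ?nnegrE ?exprn_ge0 ?invr_ge0.
Qed.

Local Open Scope ereal_scope.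

Theorem proposition11p2 (R : realType) :
  growth_rate R (family_count max5_unique5) <= growth_rate R (family_count (max_k 4)).
Proof. exact: (@growth_le R _ _ count_bound). Qed.
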